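(* Let $H \in \mathrm{Herm}(\mathcal{H})$, $\mathcal{A}$ an ancillary Hilbert space and $H' \in \mathrm{Herm}(\mathcal{H}\otimes\mathcal{A})$. Suppose $(H',\mathcal{A})$ is an $(\eta,\epsilon)$-gadget for $H$ with $U$, $P$ and $P' = U(\mathbb{I}\otimes P)U^\dagger$ as in the definition, where $U$ is the direct rotation between $\mathbb{I}\otimes P$ and $P'$. Assume $\|H'\| \le J'$ and $\|(\mathbb{I}\otimes P)H'(\mathbb{I}\otimes P^\perp)\| \le J_O'$. Then $$\|(\mathbb{I}\otimes P)H'(\mathbb{I}\otimes P)\| \le \|H\| + O(\epsilon + \eta J_O' + \eta^2 J').$$
   Context: $\|\cdot\|$ is the operator norm, $P^\perp = \mathbb{I} - P$. $(H',\mathcal{A})$ is an $(\eta,\epsilon)$-gadget for $H$ if there exist an orthogonal projector $P\neq 0$ on $\mathcal{A}$ and a unitary $U$ on $\mathcal{H}\otimes\mathcal{A}$ with $\|U - \mathbb{I}\| \le \eta$ and $\|P'H'P' - U(H\otimes P)U^\dagger\| \le \epsilon$, where $P' = U(\mathbb{I}\otimes P)U^\dagger$. Direct rotation: for orthogonal projectors $P_1, P_2$ of equal rank with $\|P_1 - P_2\| < 1$, let $R_1 = \mathbb{I} - 2P_1$, $R_2 = \mathbb{I} - 2P_2$; the direct rotation from $P_1$ to $P_2$ is $\sqrt{R_2R_1}$, with the square root taken with branch cut along the negative real axis and $\sqrt{1} = 1$. *)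

(* Defs.v *)
(* complex numbers R[i] over an abstract real field R : realType
   (mathcomp-real-closed), finite-dimensional Hilbert spaces as coordinate spaces. *)
From HB Require Import structures.
From mathcomp Require Import all_boot all_order all_algebra.
From mathcomp Require Import complex mxtens.
From mathcomp Require Import classical_sets reals.
Set Implicit Arguments. Unset Strict Implicit. Unset Printing Implicit Defensive.
Import Order.TTheory GRing.Theory Num.Theory.
Local Open Scope ring_scope.
Local Open Scope classical_set_scope.

Section Defs.
Variable R : realType.
Local Notation C := (R[i]).

Definition adj {m n : nat} (A : 'M[C]_(m, n)) : 'M[C]_(n, m) :=
  \matrix_(i, j) conjc (A j i).

Definition vnorm {n : nat} (v : 'cV[C]_n) : R :=
  Num.sqrt (\sum_i (Normc.normc (v i 0)) ^+ 2).

Definition opnorm {m n : nat} (A : 'M[C]_(m, n)) : R :=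
  sup [set x : R | exists v : 'cV[C]_n, vnorm v <= 1 /\ x = vnorm (A *m v)].

Definition herm_mx {n : nat} (A : 'M[C]_n) : Prop := adj A = A.
Definition unitary_mx {n : nat} (U : 'M[C]_n) : Prop := U *m adj U = 1%:M.
Definition orth_proj_mx {n : nat} (P : 'M[C]_n) : Prop :=
  adj P = P /\ P *m P = P.

(* principal square root (branch cut along the negative real axis, sqrt 1 = 1):
   w is the principal square root of z *)
Definition is_psqrt (z w : C) : Prop :=
  w * w = z /\ (0 < Re w \/ (Re w = 0 /\ 0 <= Im w)).

(* Direct rotation from P1 to P2: U = sqrt(R2 R1), R_k = I - 2 P_k, where
   P1, P2 are orthogonal projectors of equal rank with ||P1 - P2|| < 1.
   The principal square root of the unitary_mx (hence normal) matrix R2 R1 is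
   computed via a unitary_mx diagonalisation. *)
Definition direct_rotation {n : nat} (P1 P2 U : 'M[C]_n) : Prop :=
  orth_proj_mx P1 /\ orth_proj_mx P2 /\ \rank P1 = \rank P2 /\
  opnorm (P1 - P2) < 1 /\
  exists (V : 'M[C]_n) (d w : 'rV[C]_n),
    unitary_mx V /\
    (1%:M - 2%:R *: P2) *m (1%:M - 2%:R *: P1) = V *m diag_mx d *m adj V /\
    (forall i, is_psqrt (d 0 i) (w 0 i)) /\
    U = V *m diag_mx w *m adj V.

End Defs.

(* Main.v *)
Require Import Defs.
From HB Require Import structures.
From mathcomp Require Import all_boot all_order all_algebra.
From mathcomp Require Import complex mxtens.
From mathcomp Require Import classical_sets reals.
From mathcomp Require Import ring lra.
Set Implicit Arguments. Unset Strict Implicit. Unset Printing Implicit Defensive.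
Import Order.TTheory GRing.Theory Num.Theory.
Local Open Scope ring_scope.
Notation RE := complex.Re.
Notation IM := complex.Im.
Section Aux.
Variable R : realType.
Local Notation C := (R[i]).
Local Notation nc := (@Normc.normc R).

Lemma ReD (x y : C) : RE (x + y) = RE x + RE y. Proof. by case: x => a b; case: y => c d. Qed.
Lemma ImD (x y : C) : IM (x + y) = IM x + IM y. Proof. by case: x => a b; case: y => c d. Qed.
Lemma Re_sum (I : finType) (F : I -> C) : RE (\sum_i F i) = \sum_i RE (F i).
Proof. exact: (big_morph (@complex.Re R) ReD (erefl _)). Qed.
Lemma Im_sum (I : finType) (F : I -> C) : IM (\sum_i F i) = \sum_i IM (F i).
Proof. exact: (big_morph (@complex.Im R) ImD (erefl _)). Qed.

Lemma nc_sq (z : C) : nc z ^+ 2 = RE z ^+ 2 + IM z ^+ 2.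
Proof. by case: z => a b /=; rewrite sqr_sqrtr // addr_ge0 ?sqr_ge0. Qed.

Lemma conjc_mul_self (z : C) : conjc z * z = (RE z ^+ 2 + IM z ^+ 2)%:C%C.
Proof. case: z => a b /=; congr Complex => /=; ring. Qed.

Lemma Re_conj_mul (x y : C) : RE (conjc x * y) = RE x * RE y + IM x * IM y.
Proof. case: x => a b; case: y => c d /=; ring. Qed.

End Aux.
Section RC.
Variable R : realType.
Lemma rcM (a b : R) : ((a * b)%:C = a%:C * b%:C)%C.
Proof. by rewrite /real_complex_def; simpc. Qed.
Lemma rcD (a b : R) : ((a + b)%:C = a%:C + b%:C)%C.
Proof. by rewrite /real_complex_def; simpc. Qed.
Lemma rcRe (a : R) : RE (a%:C)%C = a. Proof. by []. Qed.
End RC.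
Section CS.
Variable R : realType.

Lemma sum_sq0 (I : finType) (a b : I -> R) :
  \sum_i (a i ^+ 2 + b i ^+ 2) = 0 -> forall i, a i = 0 /\ b i = 0.
Proof.
move=> /eqP; rewrite psumr_eq0; last by move=> i _; rewrite addr_ge0 ?sqr_ge0.
move=> /allP H i; have /H := mem_index_enum i; rewrite implyTb paddr_eq0 ?sqr_ge0 //.
by rewrite !sqrf_eq0 => /andP[/eqP -> /eqP ->].
Qed.

Lemma cs2 (I : finType) (a b c d : I -> R) :
  \sum_i (a i * c i + b i * d i) <=
  Num.sqrt (\sum_i (a i ^+ 2 + b i ^+ 2)) * Num.sqrt (\sum_i (c i ^+ 2 + d i ^+ 2)).
Proof.
set SA := \sum_i (a i ^+ 2 + _); set SB := \sum_i (c i ^+ 2 + _); set S := \sum_i (a i * c i + _).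
have SA0 : 0 <= SA by apply: sumr_ge0 => i _; rewrite addr_ge0 ?sqr_ge0.
have SB0 : 0 <= SB by apply: sumr_ge0 => i _; rewrite addr_ge0 ?sqr_ge0.
set A := Num.sqrt SA; set B := Num.sqrt SB.
have hA : A ^+ 2 = SA by rewrite sqr_sqrtr.
have hB : B ^+ 2 = SB by rewrite sqr_sqrtr.
have A0 : 0 <= A by apply: sqrtr_ge0.
have B0 : 0 <= B by apply: sqrtr_ge0.
have key : 2 * A * B * S <= B ^+ 2 * SA + A ^+ 2 * SB.
  rewrite /S /SA /SB !mulr_sumr -big_split /=; apply: ler_sum => i _.
  have h1 := sqr_ge0 (B * a i - A * c i); have h2 := sqr_ge0 (B * b i - A * d i).
  nra.
have [A00|Apos] := eqVneq A 0.
  have : SA = 0 by rewrite -hA A00 expr0n.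
  move=> /sum_sq0 H; rewrite /S big1 ?A00 ?mul0r // => i _.
  by case: (H i) => -> ->; rewrite !mul0r addr0.
have [B00|Bpos] := eqVneq B 0.
  have : SB = 0 by rewrite -hB B00 expr0n.
  move=> /sum_sq0 H; rewrite /S big1 ?B00 ?mulr0 // => i _.
  by case: (H i) => -> ->; rewrite !mulr0 addr0.
have Ap : 0 < A by rewrite lt_def Apos A0.
have Bp : 0 < B by rewrite lt_def Bpos B0.
rewrite -hA -hB in key.
have ABp : 0 < A * B by apply: mulr_gt0.
rewrite -(ler_pM2l ABp); nra.
Qed.

End CS.
Section Vn.
Variable R : realType.
Local Notation C := (R[i]).
Local Notation nc := (@Normc.normc R).
Implicit Types (n : nat).

Definition sqn n (v : 'cV[C]_n) := \sum_i (RE (v i 0) ^+ 2 + IM (v i 0) ^+ 2).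

Lemma adjE m n (A : 'M[C]_(m, n)) i j : adj A i j = conjc (A j i).
Proof. by rewrite /adj mxE. Qed.

Lemma vnormE n (v : 'cV[C]_n) : vnorm v = Num.sqrt (sqn v).
Proof. by rewrite /vnorm /sqn; congr Num.sqrt; apply: eq_bigr => i _; rewrite nc_sq. Qed.

Lemma sqn_ge0 n (v : 'cV[C]_n) : 0 <= sqn v.
Proof. by apply: sumr_ge0 => i _; rewrite addr_ge0 ?sqr_ge0. Qed.

Lemma vnorm_ge0 n (v : 'cV[C]_n) : 0 <= vnorm v.
Proof. by rewrite vnormE sqrtr_ge0. Qed.

Lemma vnorm_sq n (v : 'cV[C]_n) : vnorm v ^+ 2 = sqn v.
Proof. by rewrite vnormE sqr_sqrtr // sqn_ge0. Qed.

Lemma sqn_adj n (v : 'cV[C]_n) : ((sqn v)%:C)%C = (adj v *m v) 0 0.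
Proof.
rewrite mxE /sqn rmorph_sum /=; apply: eq_bigr => i _.
by rewrite adjE conjc_mul_self.
Qed.

Lemma Re_adj_mul n (x y : 'cV[C]_n) :
  RE ((adj x *m y) 0 0) = \sum_i (RE (x i 0) * RE (y i 0) + IM (x i 0) * IM (y i 0)).
Proof. by rewrite mxE Re_sum; apply: eq_bigr => i _; rewrite adjE Re_conj_mul. Qed.

Lemma cs n (x y : 'cV[C]_n) : RE ((adj x *m y) 0 0) <= vnorm x * vnorm y.
Proof. by rewrite Re_adj_mul !vnormE; apply: cs2. Qed.

Lemma vnorm_eq0 n (v : 'cV[C]_n) : vnorm v = 0 -> v = 0.
Proof.
rewrite vnormE => /eqP; rewrite sqrtr_eq0 le_eqVlt ltNge sqn_ge0 orbF => /eqP.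
move=> /sum_sq0 H; apply/matrixP => i j; rewrite [j]ord1 mxE.
by case: (H i); case: (v i 0) => a b /= -> ->.
Qed.

Lemma vnorm0 n : vnorm (0 : 'cV[C]_n) = 0.
Proof. by rewrite vnormE /sqn big1 ?sqrtr0 // => i _; rewrite mxE /= expr0n /= addr0. Qed.

Lemma vnorm_eq_adj n p (x : 'cV[C]_n) (y : 'cV[C]_p) :
  (adj x *m x) 0 0 = (adj y *m y) 0 0 -> vnorm x = vnorm y.
Proof. by rewrite -!sqn_adj => /complexI; rewrite !vnormE => ->. Qed.

End Vn.
Section Adj.
Variable R : realType.
Local Notation C := (R[i]).

Lemma adjK m n (A : 'M[C]_(m, n)) : adj (adj A) = A.
Proof. by apply/matrixP => i j; rewrite !adjE conjcK. Qed.

Lemma adj_mul m n p (A : 'M[C]_(m, n)) (B : 'M[C]_(n, p)) :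
  adj (A *m B) = adj B *m adj A.
Proof.
apply/matrixP => i j; rewrite adjE !mxE rmorph_sum; apply: eq_bigr => k _.
by rewrite !adjE rmorphM mulrC.
Qed.

Lemma adjD m n (A B : 'M[C]_(m, n)) : adj (A + B) = adj A + adj B.
Proof. by apply/matrixP => i j; rewrite !mxE rmorphD. Qed.

Lemma adjN m n (A : 'M[C]_(m, n)) : adj (- A) = - adj A.
Proof. by apply/matrixP => i j; rewrite !mxE rmorphN. Qed.

Lemma adjB m n (A B : 'M[C]_(m, n)) : adj (A - B) = adj A - adj B.
Proof. by rewrite adjD adjN. Qed.

Lemma adjZ m n (c : C) (A : 'M[C]_(m, n)) : adj (c *: A) = conjc c *: adj A.
Proof. by apply/matrixP => i j; rewrite !mxE rmorphM. Qed.

Lemma adj1 n : adj (1%:M : 'M[C]_n) = 1%:M.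
Proof.
apply/matrixP => i j; rewrite adjE !mxE eq_sym.
by rewrite conjc_nat.
Qed.

Lemma adj0 m n : adj (0 : 'M[C]_(m, n)) = 0.
Proof. by apply/matrixP => i j; rewrite adjE !mxE rmorph0. Qed.

Lemma adj_tens m n p q (A : 'M[C]_(m, n)) (B : 'M[C]_(p, q)) :
  adj (A *t B) = adj A *t adj B.
Proof. by apply/matrixP => i j; rewrite !mxE rmorphM. Qed.

Lemma adj_real_scale m n (a : R) (A : 'M[C]_(m, n)) : adj (a%:C%C *: A) = a%:C%C *: adj A.
Proof. by rewrite adjZ conjc_real. Qed.

End Adj.
Section Op.
Variable R : realType.
Local Notation C := (R[i]).
Local Notation nc := (@Normc.normc R).

Lemma addmxE m n (A B : 'M[C]_(m, n)) i j : (A + B) i j = A i j + B i j.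
Proof. by rewrite mxE. Qed.

Lemma scalemxE m n (c : C) (A : 'M[C]_(m, n)) i j : (c *: A) i j = c * A i j.
Proof. by rewrite mxE. Qed.

Lemma oppmxE m n (A : 'M[C]_(m, n)) i j : (- A) i j = - A i j.
Proof. by rewrite mxE. Qed.

Lemma Re_sqn n (x : 'cV[C]_n) : RE ((adj x *m x) 0 0) = sqn x.
Proof. by rewrite -sqn_adj. Qed.

Lemma sq_le (t a : R) : t ^+ 2 <= a * t -> 0 <= t -> 0 <= a -> t <= a.
Proof. move=> h t0 a0; nra. Qed.

Lemma sq_le2 (t a : R) : t ^+ 2 <= a ^+ 2 -> 0 <= t -> 0 <= a -> t <= a.
Proof. move=> h t0 a0; nra. Qed.

Lemma vnorm_add n (x y : 'cV[C]_n) : vnorm (x + y) <= vnorm x + vnorm y.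
Proof.
have e : sqn (x + y) = sqn x + sqn y + RE ((adj x *m y) 0 0) + RE ((adj y *m x) 0 0).
  rewrite -Re_sqn adjD mulmxDl !mulmxDr !addmxE !ReD !Re_sqn; lra.
have := cs x y; have := cs y x; rewrite -!vnorm_sq in e.
have := vnorm_ge0 x; have := vnorm_ge0 y; have := vnorm_ge0 (x + y).
move=> h1 h2 h3 h4 h5; apply: sq_le2; rewrite ?addr_ge0 //; nra.
Qed.
End Op.
Section Op2.
Variable R : realType.
Local Notation C := (R[i]).
Local Notation nc := (@Normc.normc R).

Lemma nc_ge0 (c : C) : 0 <= nc c. Proof. by case: c => a b; apply: sqrtr_ge0. Qed.

Lemma vnormZ n (c : C) (x : 'cV[C]_n) : vnorm (c *: x) = nc c * vnorm x.
Proof.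
have e : sqn (c *: x) = nc c ^+ 2 * sqn x.
  apply: (@complexI R); transitivity ((adj (c *: x) *m (c *: x)) 0 0).
    exact: sqn_adj.
  rewrite adjZ -scalemxAl -scalemxAr !scalemxE.
  by rewrite mulrA conjc_mul_self -nc_sq -sqn_adj -rcM.
rewrite !vnormE e sqrtrM ?sqr_ge0 // sqrtr_sqr ger0_norm //; exact: nc_ge0.
Qed.

Lemma nc_real (a : R) : nc (a%:C)%C = `|a|.
Proof. by rewrite /Normc.normc /= expr0n /= addr0 sqrtr_sqr. Qed.

Lemma vnormN n (x : 'cV[C]_n) : vnorm (- x) = vnorm x.
Proof. by apply: vnorm_eq_adj; rewrite adjN mulNmx mulmxN opprK. Qed.

Lemma vnorm_entry n (x : 'cV[C]_n) i : nc (x i 0) <= vnorm x.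
Proof.
rewrite vnormE; have -> : nc (x i 0) = Num.sqrt (RE (x i 0) ^+ 2 + IM (x i 0) ^+ 2).
  by case: (x i 0).
rewrite ler_sqrt ?sqn_ge0 // /sqn (bigD1 i) //= lerDl.
by apply: sumr_ge0 => j _; rewrite addr_ge0 ?sqr_ge0.
Qed.

Lemma vnorm_sum n (I : finType) (F : I -> 'cV[C]_n) :
  vnorm (\sum_i F i) <= \sum_i vnorm (F i).
Proof.
apply: (big_ind2 (fun (b : 'cV[C]_n) (a : R) => vnorm b <= a)).
- by rewrite vnorm0.
- move=> b1 a1 b2 a2 h1 h2; apply: le_trans (vnorm_add _ _) _; exact: lerD.
- by [].
Qed.

Lemma mulmx_cols m n (A : 'M[C]_(m, n)) (v : 'cV[C]_n) :
  A *m v = \sum_j v j 0 *: col j A.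
Proof.
apply/matrixP => i k; rewrite [k]ord1 !mxE summxE; apply: eq_bigr => j _.
by rewrite !mxE mulrC.
Qed.

Lemma opnorm_bounded m n (A : 'M[C]_(m, n)) :
  exists K, forall v, vnorm v <= 1 -> vnorm (A *m v) <= K.
Proof.
exists (\sum_(j < n) vnorm (col j A)) => v hv; rewrite mulmx_cols.
apply: le_trans (vnorm_sum _) _; apply: ler_sum => j _; rewrite vnormZ.
apply: ler_piMl; first exact: vnorm_ge0.
exact: le_trans (vnorm_entry _ _) hv.
Qed.

Definition opset m n (A : 'M[C]_(m, n)) :=
  [set x : R | exists v : 'cV[C]_n, vnorm v <= 1 /\ x = vnorm (A *m v)]%classic.

Lemma opnormE m n (A : 'M[C]_(m, n)) : opnorm A = sup (opset A).
Proof. by []. Qed.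

Lemma opset_has_sup m n (A : 'M[C]_(m, n)) : has_sup (opset A).
Proof.
split; first by exists 0, 0; rewrite vnorm0 mulmx0 vnorm0; split.
have [K hK] := opnorm_bounded A; exists K => x [v [hv ->]]; exact: hK.
Qed.

Lemma opnorm_ge_unit m n (A : 'M[C]_(m, n)) v : vnorm v <= 1 -> vnorm (A *m v) <= opnorm A.
Proof.
move=> hv; rewrite opnormE; apply: (sup_upper_bound (opset_has_sup A)).
by exists v.
Qed.

Lemma opnorm_ge0 m n (A : 'M[C]_(m, n)) : 0 <= opnorm A.
Proof.
have := @opnorm_ge_unit _ _ A 0; rewrite vnorm0 mulmx0 vnorm0; apply; exact: ler01.
Qed.

Lemma opnorm_ub m n (A : 'M[C]_(m, n)) v : vnorm (A *m v) <= opnorm A * vnorm v.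
Proof.
have [/vnorm_eq0 ->|k0] := eqVneq (vnorm v) 0.
  by rewrite mulmx0 !vnorm0 mulr0.
have kp : 0 < vnorm v by rewrite lt_def k0 vnorm_ge0.
set k := vnorm v.
have h := @opnorm_ge_unit _ _ A ((k^-1)%:C%C *: v).
rewrite -scalemxAr !vnormZ nc_real ger0_norm ?invr_ge0 ?vnorm_ge0 // mulVf // in h.
have := h (lexx _); rewrite -(ler_pM2l kp) mulrA mulfV // mul1r mulrC //.
Qed.

Lemma opnorm_le m n (A : 'M[C]_(m, n)) (k : R) :
  0 <= k -> (forall v, vnorm (A *m v) <= k * vnorm v) -> opnorm A <= k.
Proof.
move=> k0 h; rewrite opnormE; apply: ge_sup; first by case: (opset_has_sup A).
move=> x [v [hv ->]]; apply: le_trans (h v) _; exact: ler_piMr.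
Qed.

End Op2.
Section Op3.
Variable R : realType.
Local Notation C := (R[i]).

Lemma opnormD m n (A B : 'M[C]_(m, n)) : opnorm (A + B) <= opnorm A + opnorm B.
Proof.
apply: opnorm_le; first by rewrite addr_ge0 ?opnorm_ge0.
move=> v; rewrite mulmxDl mulrDl; apply: le_trans (vnorm_add _ _) _.
by apply: lerD; apply: opnorm_ub.
Qed.

Lemma opnormN m n (A : 'M[C]_(m, n)) : opnorm (- A) = opnorm A.
Proof.
have h : forall B : 'M[C]_(m, n), opnorm (- B) <= opnorm B.
  move=> B; apply: opnorm_le; first exact: opnorm_ge0.
  by move=> v; rewrite mulNmx vnormN opnorm_ub.
by apply/eqP; rewrite eq_le h /= -{1}(opprK A) h.
Qed.

Lemma opnormB m n (A B : 'M[C]_(m, n)) : opnorm (A - B) <= opnorm A + opnorm B.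
Proof. by rewrite -(opnormN B); apply: opnormD. Qed.

Lemma opnormM m n p (A : 'M[C]_(m, n)) (B : 'M[C]_(n, p)) :
  opnorm (A *m B) <= opnorm A * opnorm B.
Proof.
apply: opnorm_le; first by rewrite mulr_ge0 ?opnorm_ge0.
move=> v; rewrite -mulmxA -mulrA; apply: le_trans (opnorm_ub _ _) _.
by apply: ler_wpM2l; [exact: opnorm_ge0 | exact: opnorm_ub].
Qed.

Lemma opnorm_adj m n (A : 'M[C]_(m, n)) : opnorm (adj A) <= opnorm A.
Proof.
apply: opnorm_le; first exact: opnorm_ge0.
move=> v; set t := vnorm (adj A *m v).
have h : t ^+ 2 <= vnorm v * (opnorm A * t).
  rewrite /t vnorm_sq -Re_sqn adj_mul adjK -mulmxA.
  apply: le_trans (cs _ _) _; apply: ler_wpM2l; first exact: vnorm_ge0.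
  exact: opnorm_ub.
apply: sq_le; [by apply: (le_trans h); rewrite mulrA [vnorm v * _]mulrC | exact: vnorm_ge0|].
by rewrite mulr_ge0 ?opnorm_ge0 ?vnorm_ge0.
Qed.

Lemma opnorm_unit n (U : 'M[C]_n) : adj U *m U = 1%:M -> opnorm U <= 1.
Proof.
move=> hU; apply: opnorm_le; first exact: ler01.
move=> v; rewrite mul1r le_eqVlt; apply/orP; left; apply/eqP.
by apply: vnorm_eq_adj; rewrite adj_mul mulmxA -(mulmxA (adj v)) hU mulmx1.
Qed.

Lemma opnorm_proj n (P : 'M[C]_n) : orth_proj_mx P -> opnorm P <= 1.
Proof.
move=> [hA hI]; apply: opnorm_le; first exact: ler01.
move=> v; rewrite mul1r; apply: sq_le; last exact: vnorm_ge0.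
  rewrite vnorm_sq -Re_sqn adj_mul hA mulmxA -(mulmxA (adj v)) hI.
  by rewrite -mulmxA; apply: cs.
exact: vnorm_ge0.
Qed.

Lemma opnorm_ge1 m n (A : 'M[C]_(m, n)) (x : 'cV[C]_n) :
  x != 0 -> vnorm (A *m x) = vnorm x -> 1 <= opnorm A.
Proof.
move=> x0 e; have := opnorm_ub A x; rewrite e.
have kp : 0 < vnorm x.
  rewrite lt_def vnorm_ge0 andbT; apply/eqP => /vnorm_eq0 h; by rewrite h eqxx in x0.
by rewrite -{1}[vnorm x]mul1r ler_pM2r.
Qed.

End Op3.
Section PS.
Variable R : realType.
Local Notation C := (R[i]).

Lemma psqrt_comp (z w : C) : is_psqrt z w ->
  w * w = z /\ (0 < RE w \/ (RE w = 0 /\ 0 <= IM w)).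
Proof.
rewrite /is_psqrt -complexRe -complexIm; case=> h1 h2; split => //.
case: h2 => [h|[h h']]; [left | right].
  by move: h; rewrite (_ : 0 = (0:R)%:C%C) // ltcR.
split; first by move: h => /complexI.
by move: h'; rewrite (_ : 0 = (0:R)%:C%C) // lecR.
Qed.

Lemma psqrt_conj (z w w' : C) : is_psqrt z w -> is_psqrt (conjc z) w' ->
  conjc z * z = 1 -> z != -1 -> w' = conjc w.
Proof.
move=> /psqrt_comp [hw cw] /psqrt_comp [hw' cw'] hn hz.
have : (w' - conjc w) * (w' + conjc w) = 0.
  by rewrite mulrDr !mulrBl hw' -rmorphM hw [conjc w * w']mulrC addrA subrK subrr.
move/eqP; rewrite mulf_eq0 => /orP[/eqP h|/eqP h]; first by apply/eqP; rewrite -subr_eq0 h.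
have e : w' = - conjc w by apply/eqP; rewrite -subr_eq0 opprK h.
clear h; subst w'; exfalso; move/eqP: hz; apply.
clear hw'; move: hw hn cw cw'; case: w => a b /= <-.
move=> hn cw cw'; have ha : a = 0.
  by case: cw => [ha|[ha hb]]; case: cw' => /= [hc|[hc hd]]; lra.
move: hn; rewrite ha; simpc => /eqP; rewrite eq_complex /= => /andP[/eqP h1 _].
have hbb : b * b = 1 by nra.
by apply/eqP; rewrite eq_complex /= hbb !eqxx.
Qed.
End PS.
Section DR.
Variable R : realType.
Local Notation C := (R[i]).

Lemma adj_diag n (d : 'rV[C]_n) : adj (diag_mx d) = diag_mx (map_mx conjc d).
Proof.
apply/matrixP => i j; rewrite adjE !mxE rmorphMn eq_sym.
by case: (eqVneq i j) => [->|ne] //; rewrite !mulr0n.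
Qed.

Lemma refl_sq n (Q : 'M[C]_n) : Q *m Q = Q ->
  (1%:M - 2%:R *: Q) *m (1%:M - 2%:R *: Q) = 1%:M.
Proof.
move=> hQ; rewrite mulmxBl mul1mx mulmxBr mulmx1 -scalemxAl -scalemxAr hQ scalerA.
rewrite -natrM !scaler_nat (_ : (2 * 2 = 2 + 2)%N) // mulrnDr.
by rewrite opprB addrK subrK.
Qed.

Lemma refl_adj n (Q : 'M[C]_n) : adj Q = Q -> adj (1%:M - 2%:R *: Q) = 1%:M - 2%:R *: Q.
Proof. by move=> hQ; rewrite adjB adj1 adjZ hQ conjc_nat. Qed.

Lemma QR1 n (Q : 'M[C]_n) : Q *m Q = Q -> Q *m (1%:M - 2%:R *: Q) = - Q.
Proof.
move=> hQ; rewrite mulmxBr mulmx1 -scalemxAr hQ scaler_nat mulr2n.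
by rewrite opprD addrA subrr add0r.
Qed.

Lemma R1Q n (Q : 'M[C]_n) : Q *m Q = Q -> (1%:M - 2%:R *: Q) *m Q = - Q.
Proof.
move=> hQ; rewrite mulmxBl mul1mx -scalemxAl hQ scaler_nat mulr2n.
by rewrite opprD addrA subrr add0r.
Qed.

End DR.
Section DR2.
Variable R : realType.
Local Notation C := (R[i]).

Lemma entry_eq n (x y : 'cV[C]_n) : (forall k, x k 0 = y k 0) -> x = y.
Proof. by move=> h; apply/matrixP => k z; rewrite [z]ord1. Qed.

Lemma no_m1 n (Q P2 V : 'M[C]_n) (d : 'rV[C]_n) i :
  orth_proj_mx Q -> orth_proj_mx P2 -> opnorm (Q - P2) < 1 ->
  adj V *m V = 1%:M ->
  (1%:M - 2%:R *: P2) *m (1%:M - 2%:R *: Q) = V *m diag_mx d *m adj V ->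
  d 0 i != -1.
Proof.
move=> [hQa hQi] [hPa hPi] hnorm hV hR; apply/eqP => di.
set e := (delta_mx i 0 : 'cV[C]_n).
set x := V *m e.
have x0 : x != 0.
  apply/eqP => h; have : adj V *m x = e by rewrite /x mulmxA hV mul1mx.
  rewrite h mulmx0 => /matrixP /(_ i 0); rewrite !mxE !eqxx /=.
  by move/eqP; rewrite eq_sym oner_eq0.
have hx : (1%:M - 2%:R *: P2) *m ((1%:M - 2%:R *: Q) *m x) = - x.
  rewrite mulmxA hR -!mulmxA /x (mulmxA (adj V)) hV mul1mx.
  have -> : diag_mx d *m e = - e.
    apply/matrixP => k z; rewrite [z]ord1 mul_diag_mx !mxE.
    by case: (eqVneq k i) => [->|ne]; rewrite ?di ?mulN1r // mulr0 oppr0.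
  by rewrite mulmxN.
have E : (1%:M - 2%:R *: Q) *m x = - ((1%:M - 2%:R *: P2) *m x).
  by rewrite -mulmxN -hx mulmxA (refl_sq hPi) mul1mx.
set a := Q *m x; set b := P2 *m x.
have hxab : x = a + b.
  rewrite !mulmxBl !mul1mx -!scalemxAl -/a -/b in E.
  apply: entry_eq => k; have := congr1 (fun M : 'cV[C]_n => M k 0) E.
  rewrite !addmxE !oppmxE !addmxE !oppmxE !scalemxE => h.
  have h2 : (2%:R : C) != 0 by rewrite pnatr_eq0.
  apply/eqP; rewrite -subr_eq0; apply/eqP; apply: (mulfI h2).
  rewrite mulr0; transitivity ((x k 0 - 2%:R * a k 0) - - (x k 0 - 2%:R * b k 0)).
    ring.
  by rewrite h subrr.
have hb : b = x - a by rewrite hxab addrAC subrr add0r.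
have ha : a = x - b by rewrite hxab addrK.
have Qb : Q *m b = 0 by rewrite hb mulmxBr /a (mulmxA Q Q x) hQi subrr.
have Pa : P2 *m a = 0 by rewrite ha mulmxBr /b (mulmxA P2 P2 x) hPi subrr.
have hlt : ~ (1 <= opnorm (Q - P2)) by rewrite leNgt hnorm.
have [a0|an0] := eqVneq a 0.
  apply: hlt; apply: (@opnorm_ge1 _ _ _ _ b).
    by rewrite hb a0 subr0.
  by rewrite mulmxBl Qb /b (mulmxA P2 P2 x) hPi sub0r vnormN.
apply: hlt; apply: (@opnorm_ge1 _ _ _ _ a an0).
by rewrite mulmxBl Pa subr0 /a (mulmxA Q Q x) hQi.
Qed.

End DR2.
Section DR3.
Variable R : realType.
Local Notation C := (R[i]).

Lemma diag_comm n (M : 'M[C]_n) (w : 'rV[C]_n) :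
  (forall i j, M i j * w 0 j = conjc (w 0 i) * M i j) ->
  M *m diag_mx w = adj (diag_mx w) *m M.
Proof.
move=> h; apply/matrixP => i j.
by rewrite adj_diag mul_mx_diag mul_diag_mx !mxE h.
Qed.

Lemma dr_key n (Q P2 U : 'M[C]_n) :
  direct_rotation Q P2 U -> Q *m U *m Q = Q *m adj U *m Q.
Proof.
case=> hQ [hP [_ [hnorm [V [d [w [hV [hR [hw hU]]]]]]]]].
have [hQa hQi] := hQ; have [hPa hPi] := hP.
have hV' : adj V *m V = 1%:M := mulmx1C hV.
have cV : forall m (A : 'M[C]_(m, n)), A *m adj V *m V = A.
  by move=> m A; rewrite -mulmxA hV' mulmx1.
have cV' : forall m (A : 'M[C]_(m, n)), A *m V *m adj V = A.
  by move=> m A; rewrite -mulmxA hV mulmx1.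
set R1 := 1%:M - 2%:R *: Q.
set R2 := 1%:M - 2%:R *: P2.
have R1a : adj R1 = R1 by apply: refl_adj.
have R2a : adj R2 = R2 by apply: refl_adj.
have R1i : R1 *m R1 = 1%:M by apply: refl_sq.
have R2i : R2 *m R2 = 1%:M by apply: refl_sq.
set D := diag_mx d; set W := diag_mx w.
set M := adj V *m R1 *m V.
have e1 : R1 *m (V *m D *m adj V) *m R1 = V *m adj D *m adj V.
  have -> : V *m adj D *m adj V = adj (V *m D *m adj V).
    by rewrite !adj_mul adjK mulmxA.
  rewrite -hR adj_mul R1a R2a -!mulmxA R1i mulmx1 //.
have MM : M *m M = 1%:M.
  transitivity (adj V *m (R1 *m (V *m adj V) *m R1) *m V); first by rewrite /M !mulmxA.
  by rewrite hV mulmx1 R1i mulmx1 hV'.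
have e2 : M *m D *m M = adj D.
  transitivity (adj V *m (R1 *m (V *m D *m adj V) *m R1) *m V).
    by rewrite /M !mulmxA.
  by rewrite e1 !mulmxA hV' mul1mx -mulmxA hV' mulmx1.
have e3 : M *m D = adj D *m M.
  by rewrite -e2 -(mulmxA (M *m D)) MM mulmx1.
have e4 : forall i j, M i j * d 0 j = conjc (d 0 i) * M i j.
  move=> i j; have := congr1 (fun A : 'M[C]_n => A i j) e3.
  by rewrite /= /D adj_diag mul_mx_diag mul_diag_mx !mxE.
have dn : forall i, conjc (d 0 i) * d 0 i = 1.
  have hu : adj D *m D = 1%:M.
    transitivity (adj V *m (adj (V *m D *m adj V) *m (V *m D *m adj V)) *m V).
      by rewrite !adj_mul adjK !mulmxA hV' mul1mx !cV.
    by rewrite -hR adj_mul R1a R2a -!mulmxA (mulmxA R2) R2i mul1mx (mulmxA R1) R1i mul1mx hV'.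
  move=> i; have := congr1 (fun A : 'M[C]_n => A i i) hu.
  by rewrite /D adj_diag mul_diag_mx !mxE eqxx !mulr1n.
have dm1 : forall i, d 0 i != -1 by move=> i; exact: (@no_m1 R n Q P2 V d i hQ hP hnorm hV' hR).
have e6 : forall i j, M i j * w 0 j = conjc (w 0 i) * M i j.
  move=> i j; have [->|nz] := eqVneq (M i j) 0; first by rewrite mul0r mulr0.
  have hd : d 0 j = conjc (d 0 i).
    by apply: (mulfI nz); rewrite e4 mulrC.
  have hwj := hw j; rewrite hd in hwj.
  by rewrite (psqrt_conj (hw i) hwj (dn i) (dm1 i)) mulrC.
have e7 : M *m W = adj W *m M.
  exact: diag_comm.
have eW : M *m W *m M = adj W.
  by rewrite e7 -mulmxA MM mulmx1.
have e8 : adj U = R1 *m U *m R1.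
  rewrite hU !adj_mul adjK -eW.
  transitivity (V *m adj V *m R1 *m V *m W *m adj V *m R1 *m V *m adj V).
    by rewrite /M !mulmxA.
  by rewrite hV mul1mx cV' !mulmxA.
by rewrite e8 !mulmxA (QR1 hQi) -(mulmxA _ R1 Q) (R1Q hQi) mulmxN !mulNmx opprK.
Qed.
End DR3.
Section Tens.
Variable R : realType.
Local Notation C := (R[i]).

Lemma sum_tens n m (F : 'I_(n * m) -> R) :
  \sum_l F l = \sum_i \sum_k F (mxtens_index (i, k)).
Proof.
rewrite (reindex (@mxtens_index n m)) /=; last first.
  by exists (@mxtens_unindex n m) => x _; [rewrite mxtens_indexK | rewrite mxtens_unindexK].
by rewrite pair_big /=; apply: eq_bigr => [[i k]] _.
Qed.

Lemma sum_tensC n m (F : 'I_(n * m) -> C) :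
  \sum_l F l = \sum_i \sum_k F (mxtens_index (i, k)).
Proof.
rewrite (reindex (@mxtens_index n m)) /=; last first.
  by exists (@mxtens_unindex n m) => x _; [rewrite mxtens_indexK | rewrite mxtens_unindexK].
by rewrite pair_big /=; apply: eq_bigr => [[i k]] _.
Qed.

Definition slice n m (v : 'cV[C]_(n * m)) (k : 'I_m) : 'cV[C]_n :=
  \col_i v (mxtens_index (i, k)) 0.

Lemma sqn_slice n m (v : 'cV[C]_(n * m)) : sqn v = \sum_k sqn (slice v k).
Proof.
rewrite /sqn sum_tens exchange_big /=; apply: eq_bigr => k _.
by apply: eq_bigr => i _; rewrite !mxE.
Qed.

Lemma tens1_slice n m (H : 'M[C]_n) (v : 'cV[C]_(n * m)) k :
  slice ((H *t (1%:M : 'M[C]_m)) *m v) k = H *m slice v k.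
Proof.
apply/matrixP => i z; rewrite [z]ord1 !mxE sum_tensC; apply: eq_bigr => j _.
rewrite (bigD1 k) //= big1 ?addr0; last first.
  by move=> k' nk; rewrite tensmxE mxE eq_sym (negbTE nk) mulr0 mul0r.
by rewrite tensmxE !mxE eqxx mulr1.
Qed.

Lemma opnorm_tens1 n m (H : 'M[C]_n) : opnorm (H *t (1%:M : 'M[C]_m)) <= opnorm H.
Proof.
apply: opnorm_le; first exact: opnorm_ge0.
move=> v; apply: sq_le2; last 2 first.
- exact: vnorm_ge0.
- by rewrite mulr_ge0 ?opnorm_ge0 ?vnorm_ge0.
rewrite exprMn !vnorm_sq !sqn_slice mulr_sumr; apply: ler_sum => k _.
rewrite tens1_slice -!vnorm_sq -exprMn.
have h1 := opnorm_ub H (slice v k); have h2 := vnorm_ge0 (H *m slice v k).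
have h3 := vnorm_ge0 (slice v k); have h4 := opnorm_ge0 H.
nra.
Qed.

End Tens.
Section TP.
Variable R : realType.
Local Notation C := (R[i]).

Lemma tens11 n m : (1%:M : 'M[C]_n) *t (1%:M : 'M[C]_m) = 1%:M.
Proof.
apply/matrixP => x y.
case: (mxtens_indexP x) => i k; case: (mxtens_indexP y) => j l.
rewrite tensmxE !mxE (inj_eq (can_inj (@mxtens_indexK n m))) xpair_eqE.
by case: (i == j); case: (k == l); rewrite /= ?mulr1 ?mulr0.
Qed.

Lemma tensB n m p q (A : 'M[C]_(n, m)) (B B' : 'M[C]_(p, q)) :
  A *t (B - B') = A *t B - A *t B'.
Proof. by apply/matrixP => x y; rewrite !mxE mulrBr. Qed.

Lemma orth_tens n m (P : 'M[C]_m) : orth_proj_mx P -> orth_proj_mx ((1%:M : 'M[C]_n) *t P).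
Proof.
case=> ha hi; split; first by rewrite adj_tens adj1 ha.
by rewrite tensmx_mul mulmx1 hi.
Qed.

Lemma opnorm_tensP n m (H : 'M[C]_n) (P : 'M[C]_m) :
  orth_proj_mx P -> opnorm (H *t P) <= opnorm H.
Proof.
move=> hP; have -> : H *t P = (H *t 1%:M) *m (1%:M *t P).
  by rewrite tensmx_mul mulmx1 mul1mx.
apply: le_trans (opnormM _ _) _.
have h1 := opnorm_tens1 m H; have h2 := opnorm_proj (orth_tens n hP).
have h3 := opnorm_ge0 (H *t (1%:M : 'M[C]_m)).
by apply: le_trans (ler_wpM2l h3 h2) _; rewrite mulr1.
Qed.

Lemma nc2 : Normc.normc (2%:R : C) = 2.
Proof. by rewrite /Normc.normc /= addr0 expr0n /= addr0 sqrtr_sqr ger0_norm // addr_ge0. Qed.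

Lemma vnorm_dbl n (x : 'cV[C]_n) : vnorm (x + x) = 2 * vnorm x.
Proof. by rewrite -mulr2n -scaler_nat vnormZ nc2. Qed.

Lemma opnorm_dbl m n (A : 'M[C]_(m, n)) : 2 * opnorm A <= opnorm (A + A).
Proof.
rewrite mulrC -ler_pdivlMr //; apply: opnorm_le.
  by rewrite divr_ge0 ?opnorm_ge0.
move=> v; rewrite mulrAC ler_pdivlMr // mulrC -vnorm_dbl -mulmxDl.
exact: opnorm_ub.
Qed.

End TP.
Section Main.
Variable R : realType.
Local Notation C := (R[i]).
Lemma opnormM_le m n p (A : 'M[C]_(m, n)) (B : 'M[C]_(n, p)) a b :
  opnorm A <= a -> opnorm B <= b -> opnorm (A *m B) <= a * b.
Proof.
move=> ha hb; apply: le_trans (opnormM _ _) _.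
by apply: ler_pM; rewrite ?opnorm_ge0.
Qed.
Lemma half_le (a b c : R) : 0 <= a -> 2 * a <= b -> b <= c -> 0 <= c -> a <= c.
Proof. move=> *; lra. Qed.
Lemma final_real (x t0 s y1 y2 y3 e h p q : R) :
  x <= t0 + s -> s <= y1 + y3 -> t0 <= e + h ->
  y1 <= q + p -> y2 <= q + p -> y3 <= q ->
  0 <= e -> 0 <= p -> 0 <= q ->
  x + y2 <= h + 3 * (e + p + q).
Proof. move=> *; lra. Qed.
End Main.

Theorem lemma14 (R : realType) :
  exists c : R, 0 < c /\
  forall (n m : nat) (H : 'M[R[i]]_n) (H' : 'M[R[i]]_(n * m))
         (P : 'M[R[i]]_m) (U : 'M[R[i]]_(n * m)) (eta eps J' JO' : R),
    herm_mx H -> herm_mx H' ->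
    orth_proj_mx P -> P != 0 ->
    unitary_mx U ->
    opnorm (U - 1%:M) <= eta ->
    opnorm (U *m (1%:M *t P) *m adj U *m H' *m (U *m (1%:M *t P) *m adj U)
            - U *m (H *t P) *m adj U) <= eps ->
    direct_rotation (1%:M *t P) (U *m (1%:M *t P) *m adj U) U ->
    opnorm H' <= J' ->
    opnorm ((1%:M *t P) *m H' *m (1%:M *t (1%:M - P))) <= JO' ->
    opnorm ((1%:M *t P) *m H' *m (1%:M *t P))
      <= opnorm H + c * (eps + eta * JO' + eta ^+ 2 * J').
Proof.
exists 3; split; first by rewrite ltr0n.
move=> n m H H' P U eta eps J' JO' hH hH' hP hP0 hU hUe heps hdr hJ hJO.
have hk := dr_key hdr.
have hQ := orth_tens n hP.
rewrite tensB tens11 in hJO.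
move: hk hQ hJO heps; set Q := 1%:M *t P => hk hQ hJO heps.
have [hQa hQi] := hQ.
set Qp := 1%:M - Q in hJO.
have hQp : orth_proj_mx Qp.
  split; first by rewrite /Qp adjB adj1 hQa.
  by rewrite /Qp mulmxBl mul1mx mulmxBr mulmx1 hQi subrr subr0.
have hUa : adj U *m U = 1%:M := mulmx1C hU.
set D := U - 1%:M in hUe.
have hUD : U = 1%:M + D by rewrite /D addrC subrK.
have hUaD : adj U = 1%:M + adj D by rewrite hUD adjD adj1.
have eQp : Qp = (1%:M : 'M[R[i]]_(n * m)) - Q :> 'M[R[i]]_(n * m) by [].
have hQpa : adj Qp = Qp by case: hQp.
clearbody D. clearbody Qp.
have e0 : 0 <= eta := le_trans (opnorm_ge0 _) hUe.
have nDa : opnorm (adj D) <= eta := le_trans (opnorm_adj D) hUe.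
have J0 : 0 <= J' := le_trans (opnorm_ge0 _) hJ.
have JO0 : 0 <= JO' := le_trans (opnorm_ge0 _) hJO.
have eps0 : 0 <= eps := le_trans (opnorm_ge0 _) heps.
have nQ : opnorm Q <= 1 := opnorm_proj hQ.
have nQp : opnorm Qp <= 1 := opnorm_proj hQp.
have nU : opnorm U <= 1 := opnorm_unit hUa.
have nUa : opnorm (adj U) <= 1 by apply: opnorm_unit; rewrite adjK.
have nX : opnorm (Q *m H' *m Q) <= J'.
  by have := opnormM_le (opnormM_le nQ hJ) nQ; rewrite mul1r mulr1.
have kQD : Q *m adj D *m Q = Q *m D *m Q.
  move: hk; rewrite hUaD {1}hUD !mulmxDr !mulmxDl !mulmx1.
  by move/addrI => ->.
have kZ : D + adj D + adj D *m D = 0.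
  move: hUa; rewrite hUaD {1}hUD mulmxDl mul1mx !mulmxDr mulmx1.
  by move=> h; apply: (@addrI _ 1%:M); rewrite addr0 -[RHS]h !addrA.
have kDD : Q *m D *m Q + Q *m D *m Q = - (Q *m (adj D *m D) *m Q).
  apply/eqP; rewrite -addr_eq0 -{2}kQD -!mulmxDl -!mulmxDr kZ mulmx0 mul0mx //.
have nQDQ : opnorm (Q *m D *m Q) <= eta ^+ 2.
  have h1 : opnorm (Q *m D *m Q + Q *m D *m Q) <= eta ^+ 2.
    rewrite kDD opnormN.
    have := opnormM_le (opnormM_le nQ (opnormM_le nDa hUe)) nQ.
    by rewrite mul1r mulr1 expr2.
  have h2 := opnorm_dbl (Q *m D *m Q); have h3 := opnorm_ge0 (Q *m D *m Q).
  have h4 : 0 <= eta ^+ 2 by rewrite sqr_ge0.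
  exact: (half_le h3 h2 h1 h4).
have nT0 : opnorm (Q *m adj U *m H' *m U *m Q) <= eps + opnorm H.
  have -> : Q *m adj U *m H' *m U *m Q =
      adj U *m (U *m Q *m adj U *m H' *m (U *m Q *m adj U)) *m U.
    rewrite !mulmxA hUa mul1mx.
    by rewrite -[_ *m adj U *m U]mulmxA hUa mulmx1.
  have h1 := opnormM_le (opnormM_le nUa
    (lexx (opnorm (U *m Q *m adj U *m H' *m (U *m Q *m adj U))))) nU.
  rewrite mul1r mulr1 in h1.
  apply: le_trans h1 _.
  rewrite -[X in opnorm X](subrK (U *m (H *t P) *m adj U)).
  apply: le_trans (opnormD _ _) _; apply: lerD => //.
  have := opnormM_le (opnormM_le nU (opnorm_tensP H hP)) nUa.
  by rewrite mul1r mulr1.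
have hT0 : Q *m adj U *m H' *m U *m Q = Q *m H' *m Q + Q *m adj D *m H' *m Q +
  (Q *m H' *m D *m Q + Q *m adj D *m H' *m D *m Q).
  by rewrite hUaD hUD !mulmxDr !mulmxDl !mulmx1 ?mulmxA.
have eX : Q *m H' *m Q = Q *m adj U *m H' *m U *m Q
    - (Q *m H' *m D *m Q + Q *m adj D *m H' *m D *m Q) - Q *m adj D *m H' *m Q.
  by rewrite hT0 !addrK.
have nY1 : opnorm (Q *m H' *m D *m Q) <= eta ^+ 2 * J' + eta * JO'.
  have -> : Q *m H' *m D *m Q = (Q *m H' *m Q) *m (Q *m D *m Q) + Q *m H' *m Qp *m D *m Q.
    rewrite eQp mulmxDr mulmx1 mulmxN !mulmxDl !mulNmx !mulmxA.
    by rewrite -[Q *m H' *m Q *m Q]mulmxA hQi addrC subrK.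
  apply: le_trans (opnormD _ _) _; apply: lerD.
    by rewrite mulrC; apply: opnormM_le.
  have := opnormM_le (opnormM_le hJO hUe) nQ.
  by rewrite mulr1 mulrC.
have nY2 : opnorm (Q *m adj D *m H' *m Q) <= eta ^+ 2 * J' + eta * JO'.
  have -> : Q *m adj D *m H' *m Q = (Q *m D *m Q) *m (Q *m H' *m Q) + (Q *m adj D) *m (Qp *m H' *m Q).
    rewrite -kQD eQp !mulmxDl mul1mx !mulNmx mulmxDr mulmxN !mulmxA.
    by rewrite -[Q *m adj D *m Q *m Q]mulmxA hQi addrC subrK.
  apply: le_trans (opnormD _ _) _; apply: lerD.
    exact: opnormM_le.
  have h1 : opnorm (Qp *m H' *m Q) <= JO'.
    apply: le_trans _ hJO.
    have -> : Qp *m H' *m Q = adj (Q *m H' *m Qp) by rewrite !adj_mul hQpa hH' hQa mulmxA.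
    exact: opnorm_adj.
  have := opnormM_le (opnormM_le nQ nDa) h1.
  by rewrite mul1r.
have nY3 : opnorm (Q *m adj D *m H' *m D *m Q) <= eta ^+ 2 * J'.
  have := opnormM_le (opnormM_le (opnormM_le (opnormM_le nQ nDa) hJ) hUe) nQ.
  by rewrite mulr1 mul1r mulrAC expr2.
rewrite eX.
apply: le_trans (opnormB _ _) _.
have h1 := opnormB (Q *m adj U *m H' *m U *m Q)
  (Q *m H' *m D *m Q + Q *m adj D *m H' *m D *m Q).
have h2 := opnormD (Q *m H' *m D *m Q) (Q *m adj D *m H' *m D *m Q).
apply: (final_real h1 h2 nT0 nY1 nY2 nY3) => //.
  by rewrite mulr_ge0.
by rewrite mulr_ge0 ?sqr_ge0.
Qed.
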